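(* Let $\alpha\ge0$, $\rho\in\mathcal{R}_\alpha$, and $L_\rho(x):=x^\alpha\rho(x)$. Assume further that for every $\eta>0$ the function $x\mapsto x^\eta L_\rho(x)$ is eventually increasing and $x\mapsto x^{-\eta}L_\rho(x)$ is eventually decreasing. Then: (a) If $0\le\alpha<1$, $$\lim_{b\to\infty}\sup_{a\in[0,b)}\Big|\frac{I_\rho(b)-I_\rho(a)}{L_\rho(b)(b^{1-\alpha}-a^{1-\alpha})}-\frac1{1-\alpha}\Big|=0.$$ (b) If $\alpha>1$, $$\lim_{b\to\infty}\sup_{a\in(b,\infty)}\Big|\frac{I_\rho(a)-I_\rho(b)}{L_\rho(b)(b^{1-\alpha}-a^{1-\alpha})}-\frac1{\alpha-1}\Big|=0.$$
   Context: For $\alpha\ge0$, $\mathcal{R}_\alpha$ denotes the set of measurable functions $\rho:[0,\infty)\to(0,1]$ that are regularly varying of order $-\alpha$, i.e. $\lim_{t\to\infty}\rho(\lambda t)/\rho(t)=\lambda^{-\alpha}$ for every $\lambda>0$. $I_\rho(t):=\int_0^t\rho(s)ds$. *)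

(* Defs.v *)
From HB Require Import structures.
From mathcomp Require Import all_boot all_order all_algebra.
From mathcomp Require Import all_classical all_reals all_analysis.
Set Implicit Arguments. Unset Strict Implicit. Unset Printing Implicit Defensive.
Import Order.TTheory GRing.Theory Num.Theory.
Import numFieldNormedType.Exports.
Local Open Scope classical_set_scope.
Local Open Scope ring_scope.

Definition regvar {R : realType} (alpha : R) (rho : R -> R) : Prop :=
  measurable_fun (`[0%R, +oo[ : set R) rho /\
  (forall t : R, 0 <= t -> 0 < rho t <= 1) /\
  (forall lam : R, 0 < lam ->
     (fun t => rho (lam * t) / rho t) @ +oo --> lam `^ (- alpha)).

Definition Irho {R : realType} (rho : R -> R) (t : R) : R :=
  Rintegral lebesgue_measure `[0%R, t] rho.

Definition Lrho {R : realType} (alpha : R) (rho : R -> R) (x : R) : R :=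
  x `^ alpha * rho x.

Definition eventually_increasing {R : realType} (f : R -> R) : Prop :=
  exists M : R, forall x y, M <= x -> x <= y -> f x <= f y.

Definition eventually_decreasing {R : realType} (f : R -> R) : Prop :=
  exists M : R, forall x y, M <= x -> x <= y -> f y <= f x.

(* Main.v *)
Require Import Defs.
From HB Require Import structures.
From mathcomp Require Import all_boot all_order all_algebra.
From mathcomp Require Import all_classical all_reals all_analysis.
From mathcomp Require Import ring lra.
Import Order.TTheory GRing.Theory Num.Theory.
Import numFieldNormedType.Exports.
Local Open Scope classical_set_scope.
Local Open Scope ring_scope.
Lemma sup_cvg0 {R : realType} (S : R -> set R) (g : R -> R -> R) :
  (forall e : R, 0 < e -> \forall b \near +oo,
      (exists a, S b a) /\ forall a, S b a -> `|g b a| <= e) ->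
  (fun b : R => ereal_sup [set (`|g b a|)%:E | a in S b]) @ +oo --> 0%E.
Proof.
move=> H.
have key : forall e : R, 0 < e -> \forall b \near +oo,
   (0 <= ereal_sup [set (`|g b a|)%:E | a in S b] <= e%:E)%E.
  move=> e e0; apply: filterS (H e e0) => b [[a0 Sa0] Hb].
  apply/andP; split.
    apply: le_trans (ereal_sup_ubound _); last by exists a0.
    by rewrite lee_fin.
  by apply: ge_ereal_sup => _ [a Sa <-]; rewrite lee_fin Hb.
apply/fine_cvgP; split.
  apply: filterS (key 1 ltr01) => b /andP[h1 h2].
  by rewrite fin_numE; apply/andP; split;
   [apply: contraTN h1 => /eqP -> | apply: contraTN h2 => /eqP ->].
apply/cvgr0Pnorm_le => e e0.
apply: filterS (key e e0) => b /andP[h1 h2] /=.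
have hf : ereal_sup [set (`|g b a|)%:E | a in S b] \is a fin_num.
  by rewrite fin_numE; apply/andP; split;
   [apply: contraTN h1 => /eqP -> | apply: contraTN h2 => /eqP ->].
move: h1 h2; rewrite -(fineK hf) !lee_fin => h1 h2.
by rewrite ger0_norm.
Qed.
Section S.
Context {R : realType}.
Notation mu := (@lebesgue_measure R).

Lemma cont_pow (g x : R) : 0 < x -> {for x, continuous (fun y : R => y `^ g)}.
Proof.
move=> x0; apply: differentiable_continuous; apply/derivable1_diffP.
by apply: derivable_powR; rewrite in_itv/= x0.
Qed.

Lemma cont_cpow (c g x : R) : 0 < x -> {for x, continuous (fun y : R => c * y `^ g)}.
Proof. by move=> x0; apply: cvgMr; exact: cont_pow. Qed.

Lemma within_pow (c g u v : R) : 0 < u ->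
  {within `[u, v], continuous (fun y : R => c * y `^ g)}.
Proof.
move=> u0; apply: continuous_in_subspaceT => x; rewrite inE/= in_itv/= => /andP[ux _].
exact: cont_cpow (lt_le_trans u0 ux).
Qed.

Lemma integrable_pow (c g u v : R) : 0 < u ->
  mu.-integrable `[u, v] (EFin \o (fun y : R => c * y `^ g)).
Proof.
move=> u0; apply: continuous_compact_integrable; first exact: segment_compact.
exact: within_pow.
Qed.

Lemma int_pow (c g u v : R) : 0 < u -> u <= v -> g + 1 != 0 ->
  \int[mu]_(x in `[u, v]) (c * x `^ g) = c * ((v `^ (g+1) - u `^ (g+1)) / (g+1)).
Proof.
move=> u0; rewrite le_eqVlt => /predU1P[<- _|uv g1].
  by rewrite set_itv1 Rintegral_set1 subrr mul0r mulr0.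
pose F := fun y : R => (c / (g+1)) * y `^ (g+1).
have dF : forall x : R, 0 < x -> is_derive x 1 F (c * x `^ g).
  move=> x x0.
  have := @is_deriveZ R R^o R^o (fun y : R => y `^ (g+1)) (c / (g+1)) x 1 _ (is_derive1_powR (g+1) x0).
  rewrite addrK /= => H.
  have -> : c * x `^ g = (c / (g+1)) *: ((g + 1) * x `^ g).
    by rewrite /GRing.scale /= mulrA divfK.
  exact: H.
rewrite /Rintegral (@continuous_FTC2 _ _ F)//.
- by rewrite /F /= mulrA -mulrBr mulrAC.
- exact: within_pow.
- split.
  + move=> x; rewrite in_itv/= => /andP[ux _].
    by have [] := dF x (lt_trans u0 ux).
  + apply: cvg_at_right_filter.
    exact: cont_cpow.
  + apply: cvg_at_left_filter.
    exact: cont_cpow (lt_trans u0 uv).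
- move=> x; rewrite in_itv/= => /andP[ux _].
  by rewrite derive1E; have [_ ->] := dF x (lt_trans u0 ux).
Qed.
End S.
Section S.
Context {R : realType}.
Notation mu := (@lebesgue_measure R).

Lemma int_rho (alpha : R) rho u v : regvar alpha rho -> 0 <= u ->
  mu.-integrable `[u, v] (EFin \o rho).
Proof.
move=> [mr [br _]] u0.
have sub : `[u, v] `<=` `[0, +oo[.
  by move=> x /=; rewrite !in_itv/= andbT => /andP[ux _]; exact: le_trans ux.
apply: measurable_bounded_integrable => //.
- exact: compact_finite_measure (@segment_compact R u v).
- exact: measurable_funS _ sub mr.
- exists 1; split => // M M1 x /sub /=; rewrite in_itv/= andbT => x0.
  have /andP[r0 r1] := br x x0.
  by rewrite ger0_norm ?ltW//; exact: le_lt_trans r1 M1.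

Qed.

Lemma diffI (alpha : R) rho u v : regvar alpha rho -> 0 <= u -> u <= v ->
  Irho rho v - Irho rho u = \int[mu]_(x in `[u, v]) rho x.
Proof.
move=> hr u0 uv; rewrite /Irho.
rewrite Rintegral_itvB; last 3 first.
- exact: (@int_rho alpha rho 0 v hr (lexx 0)).
- by rewrite bnd_simp.
- by rewrite bnd_simp.
rewrite Rintegral_itv_obnd_cbnd //.
have h := @int_rho alpha rho u v hr u0. apply: integrableS h => //.
by move=> x; apply: subset_itvr; rewrite bnd_simp.
Qed.
End S.
Section S.
Context {R : realType}.

Lemma powRD' (x r s : R) : 0 < x -> x `^ (r + s) = x `^ r * x `^ s.
Proof. by move=> x0; rewrite powRD// (gt_eqF x0) implybT. Qed.

Lemma rho_id (alpha : R) rho e s : 0 < s ->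
  rho s = s `^ (- e - alpha) * (s `^ e * Lrho alpha rho s).
Proof.
move=> s0; rewrite /Lrho !mulrA -!powRD'//.
have -> : - e - alpha + e + alpha = 0 by ring.
by rewrite powRr0 mul1r.
Qed.

Lemma pow_id1 (x z q e : R) : 0 < x -> 0 < z ->
  x `^ e * z `^ (q - e) = z `^ q * (x `^ e / z `^ e).
Proof.
move=> x0 z0; have -> : z `^ q = z `^ (q - e) * z `^ e by rewrite -powRD' // subrK.
have := powR_gt0 e z0; move: (x `^ e) (z `^ e) (z `^ (q - e)) => A B C B0.
by field; rewrite gt_eqF.
Qed.

Lemma pow_id2 (x z q e : R) : 0 < x -> 0 < z ->
  x `^ (- e) * z `^ (q + e) = z `^ q * (z `^ e / x `^ e).
Proof.
move=> x0 z0; rewrite powRN powRD'//.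
have := powR_gt0 e x0; move: (x `^ e) (z `^ e) (z `^ q) => A B C A0.
by field; rewrite gt_eqF.
Qed.

Lemma pow_le (x y e : R) : 0 < x -> x <= y -> 0 <= e -> x `^ e <= y `^ e.
Proof.
move=> x0 xy e0; apply: ge0_ler_powR => //; rewrite nnegrE ltW//.
exact: lt_le_trans xy.
Qed.

Lemma ratio (J D p e : R) : 0 < D -> 0 < e -> e <= p / 2 ->
  D / (p + e) <= J -> J <= D / (p - e) -> `|J / D - p^-1| <= 2 * e / (p * p).
Proof.
move=> D0 e0 ep h1 h2.
have p0 : 0 < p by lra.
have pe0 : 0 < p - e by lra.
have pe1 : 0 < p + e by lra.
set x := J / D.
have hx1 : 1 <= x * (p + e).
  by rewrite /x mulrAC ler_pdivlMr// mul1r -ler_pdivrMr.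
have hx2 : x * (p - e) <= 1.
  by rewrite /x mulrAC ler_pdivrMr// mul1r -ler_pdivlMr.
have x0 : 0 < x by rewrite /x divr_gt0// (lt_le_trans _ h1)// divr_gt0.
have xb : x * (p / 2) <= 1.
  apply: le_trans hx2; apply: ler_wpM2l; [exact: ltW | lra].
have -> : x - p^-1 = (x * p - 1) / p.
  by field; rewrite gt_eqF.
rewrite normrM [`|p^-1|]ger0_norm; last by rewrite invr_ge0 ltW.
rewrite ler_pdivrMr//.
have -> : 2 * e / (p * p) * p = 2 * e / p by field; rewrite gt_eqF.
have xe : x * e <= 2 * e / p.
  rewrite ler_pdivlMr// mulrAC; apply: ler_wpM2r; [exact: ltW | lra].
rewrite mulrDr mulrBr in hx1 hx2.
rewrite ler_norml; apply/andP; split; lra.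
Qed.
End S.
Section S5.
Context {R : realType}.
Notation mu := (@lebesgue_measure R).

Lemma int_bounds (alpha : R) rho u v c1 c2 g1 g2 : regvar alpha rho ->
  0 < u -> u <= v -> g1 + 1 != 0 -> g2 + 1 != 0 ->
  (forall s, u <= s -> s <= v -> c1 * s `^ g1 <= rho s /\ rho s <= c2 * s `^ g2) ->
  c1 * ((v `^ (g1+1) - u `^ (g1+1)) / (g1+1)) <= Irho rho v - Irho rho u /\
  Irho rho v - Irho rho u <= c2 * ((v `^ (g2+1) - u `^ (g2+1)) / (g2+1)).
Proof.
move=> hr u0 uv h1 h2 hs.
rewrite (diffI _ _ _ _ hr (ltW u0) uv) -!int_pow//; split; apply: le_Rintegral => //.
- exact: integrable_pow.
- exact: int_rho _ _ _ _ hr (ltW u0).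
- by move=> x /=; rewrite in_itv/= => /andP[ux xv]; have [] := hs x ux xv.
- exact: int_rho _ _ _ _ hr (ltW u0).
- exact: integrable_pow.
- by move=> x /=; rewrite in_itv/= => /andP[ux xv]; have [] := hs x ux xv.
Qed.
End S5.
Section S6.
Context {R : realType}.

Lemma Lrho_gt0 (alpha : R) rho x : regvar alpha rho -> 0 < x -> 0 < Lrho alpha rho x.
Proof.
move=> [_ [br _]] x0; rewrite /Lrho mulr_gt0 ?powR_gt0//.
by have /andP[] := br x (ltW x0).
Qed.

Lemma resh (c l X Y q : R) : c * l * ((X - Y) / q) = l * (c * X - c * Y) / q.
Proof. by ring. Qed.

Lemma coreA (alpha : R) rho eta M a b : regvar alpha rho -> 0 < eta ->
  eta <= (1 - alpha) / 2 ->
  (forall x y, M <= x -> x <= y -> x `^ eta * Lrho alpha rho x <= y `^ eta * Lrho alpha rho y) ->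
  (forall x y, M <= x -> x <= y -> y `^ (- eta) * Lrho alpha rho y <= x `^ (- eta) * Lrho alpha rho x) ->
  0 < M -> M <= a -> a < b ->
  `|(Irho rho b - Irho rho a) / (Lrho alpha rho b * (b `^ (1 - alpha) - a `^ (1 - alpha)))
     - (1 - alpha)^-1| <= 2 * eta / ((1 - alpha) * (1 - alpha)).
Proof.
move=> hr e0 ep hinc hdec M0 Ma ab.
set p := 1 - alpha.
have p0 : 0 < p by rewrite /p; lra.
have a0 : 0 < a by exact: lt_le_trans Ma.
have b0 : 0 < b by exact: lt_trans ab.
have Lb := Lrho_gt0 _ _ _ hr b0.
set L := Lrho alpha rho.
have hs : forall s, a <= s -> s <= b ->
    b `^ (- eta) * L b * s `^ (eta - alpha) <= rho s /\
    rho s <= b `^ eta * L b * s `^ (- eta - alpha).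
  move=> s aS sb; have s0 : 0 < s by exact: lt_le_trans aS.
  have Ms : M <= s by exact: le_trans aS.
  split.
    rewrite (rho_id alpha rho (- eta) s s0) opprK mulrC.
    exact: (ler_wpM2l (powR_ge0 _ _) (hdec _ _ Ms sb)).
  rewrite (rho_id alpha rho eta s s0) [X in _ <= X]mulrC.
  exact: (ler_wpM2l (powR_ge0 _ _) (hinc _ _ Ms sb)).
have g1 : eta - alpha + 1 = p + eta by rewrite /p; ring.
have g2 : - eta - alpha + 1 = p - eta by rewrite /p; ring.
have n1 : eta - alpha + 1 != 0 by rewrite g1 gt_eqF //; lra.
have n2 : - eta - alpha + 1 != 0 by rewrite g2 gt_eqF //; lra.
have [lo hi] := int_bounds _ _ a b (b `^ (- eta) * L b) (b `^ eta * L b) (eta - alpha) (- eta - alpha)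
  hr a0 (ltW ab) n1 n2 hs.
rewrite g1 in lo; rewrite g2 in hi.
have Ap : 0 <= a `^ p by exact: powR_ge0.
have ab' : a `^ p < b `^ p.
  by apply: gt0_ltr_powR => //; rewrite nnegrE ltW.
have hae : a `^ eta / b `^ eta <= 1.
  rewrite ler_pdivrMr ?powR_gt0// mul1r; exact: pow_le a0 (ltW ab) (ltW e0).
have hbe : 1 <= b `^ eta / a `^ eta.
  rewrite ler_pdivlMr ?powR_gt0// mul1r; exact: pow_le a0 (ltW ab) (ltW e0).
apply: (ratio _ _ p eta).
- by rewrite mulr_gt0 // subr_gt0.
- exact: e0.
- exact: ep.
- apply: le_trans lo.
  rewrite resh.
  rewrite (pow_id2 b b p eta b0 b0) (pow_id2 b a p eta b0 a0).
  rewrite divff; last by rewrite gt_eqF // powR_gt0.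
  rewrite mulr1.
  apply: ler_wpM2r; first by rewrite invr_ge0 ltW // addr_gt0.
  apply: ler_wpM2l; first exact: ltW.
  by rewrite lerD2l lerN2 ler_piMr.
- apply: le_trans hi _.
  rewrite resh.
  rewrite (pow_id1 b b p eta b0 b0) (pow_id1 b a p eta b0 a0).
  rewrite divff; last by rewrite gt_eqF // powR_gt0.
  rewrite mulr1.
  apply: ler_wpM2r; first by rewrite invr_ge0 ltW // subr_gt0 (le_lt_trans ep) // ltr_pdivrMr // ltr_pMr // ltr1n.
  apply: ler_wpM2l; first exact: ltW.
  by rewrite lerD2l lerN2 ler_peMr.
Qed.
End S6.
Section S7.
Context {R : realType}.

Lemma pow_decr (x y r : R) : 0 < x -> x < y -> r < 0 -> y `^ r < x `^ r.
Proof.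
move=> x0 xy r0; have y0 : 0 < y by exact: lt_trans xy.
rewrite /powR (gt_eqF x0) (gt_eqF y0) ltr_expR ltr_nM2l // ltr_ln // posrE.
Qed.

Lemma flipdiv (X Y q : R) : (X - Y) / q = (Y - X) / (- q).
Proof. by rewrite invrN mulrN -mulNr opprB. Qed.

Lemma coreB (alpha : R) rho eta M a b : regvar alpha rho -> 0 < eta ->
  eta <= (alpha - 1) / 2 ->
  (forall x y, M <= x -> x <= y -> x `^ eta * Lrho alpha rho x <= y `^ eta * Lrho alpha rho y) ->
  (forall x y, M <= x -> x <= y -> y `^ (- eta) * Lrho alpha rho y <= x `^ (- eta) * Lrho alpha rho x) ->
  0 < M -> M <= b -> b < a ->
  `|(Irho rho a - Irho rho b) / (Lrho alpha rho b * (b `^ (1 - alpha) - a `^ (1 - alpha)))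
     - (alpha - 1)^-1| <= 2 * eta / ((alpha - 1) * (alpha - 1)).
Proof.
move=> hr e0 ep hinc hdec M0 Mb ba.
set p := alpha - 1.
set r := 1 - alpha.
have p0 : 0 < p by rewrite /p; lra.
have rp : r = - p by rewrite /r /p; ring.
have b0 : 0 < b by exact: lt_le_trans Mb.
have a0 : 0 < a by exact: lt_trans ba.
have Lb := Lrho_gt0 _ _ _ hr b0.
set L := Lrho alpha rho.
have hs : forall s, b <= s -> s <= a ->
    b `^ eta * L b * s `^ (- eta - alpha) <= rho s /\
    rho s <= b `^ (- eta) * L b * s `^ (eta - alpha).
  move=> s bS sa; have s0 : 0 < s by exact: lt_le_trans bS.
  split.
    rewrite (rho_id alpha rho eta s s0) mulrC.
    exact: (ler_wpM2l (powR_ge0 _ _) (hinc _ _ Mb bS)).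
  rewrite (rho_id alpha rho (- eta) s s0) opprK [X in _ <= X]mulrC.
  exact: (ler_wpM2l (powR_ge0 _ _) (hdec _ _ Mb bS)).
have g1 : - eta - alpha + 1 = r - eta by rewrite /r; ring.
have g2 : eta - alpha + 1 = r + eta by rewrite /r; ring.
have n1 : - eta - alpha + 1 != 0 by rewrite g1 rp lt_eqF //; lra.
have n2 : eta - alpha + 1 != 0 by rewrite g2 rp lt_eqF //; lra.
have [lo hi] := int_bounds _ _ b a (b `^ eta * L b) (b `^ (- eta) * L b) (- eta - alpha) (eta - alpha)
  hr b0 (ltW ba) n1 n2 hs.
rewrite g1 flipdiv in lo; rewrite g2 flipdiv in hi.
have hae : b `^ eta / a `^ eta <= 1.
  rewrite ler_pdivrMr ?powR_gt0// mul1r; exact: pow_le b0 (ltW ba) (ltW e0).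
have hbe : 1 <= a `^ eta / b `^ eta.
  rewrite ler_pdivlMr ?powR_gt0// mul1r; exact: pow_le b0 (ltW ba) (ltW e0).
have Ar : 0 <= a `^ r by exact: powR_ge0.
have ab' : a `^ r < b `^ r by apply: pow_decr => //; rewrite rp oppr_lt0.
have e1 : - (r - eta) = p + eta by rewrite rp; ring.
have e2 : - (r + eta) = p - eta by rewrite rp; ring.
rewrite e1 in lo; rewrite e2 in hi.
apply: (ratio _ _ p eta).
- by rewrite mulr_gt0 // subr_gt0.
- exact: e0.
- exact: ep.
- apply: le_trans lo.
  rewrite resh.
  rewrite (pow_id1 b b r eta b0 b0) (pow_id1 b a r eta b0 a0).
  rewrite divff; last by rewrite gt_eqF // powR_gt0.
  rewrite mulr1.
  apply: ler_wpM2r; first by rewrite invr_ge0 ltW // addr_gt0.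
  apply: ler_wpM2l; first exact: ltW.
  by rewrite lerD2l lerN2 ler_piMr.
- apply: le_trans hi _.
  rewrite resh.
  rewrite (pow_id2 b b r eta b0 b0) (pow_id2 b a r eta b0 a0).
  rewrite divff; last by rewrite gt_eqF // powR_gt0.
  rewrite mulr1.
  apply: ler_wpM2r; first by rewrite invr_ge0 ltW // subr_gt0 (le_lt_trans ep) // ltr_pdivrMr // ltr_pMr // ltr1n.
  apply: ler_wpM2l; first exact: ltW.
  by rewrite lerD2l lerN2 ler_peMr.
Qed.
End S7.
Section S8.
Context {R : realType}.
Notation mu := (@lebesgue_measure R).

Lemma int_le_len (alpha : R) rho u v : regvar alpha rho -> 0 <= u -> u <= v ->
  \int[mu]_(x in `[u, v]) rho x <= v - u.
Proof.
move=> hr u0 uv.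
have hb := hr.2.1.
apply: (@le_trans _ _ (\int[mu]_(x in `[u, v]) (cst 1 x))).
  apply: le_Rintegral => //.
  - exact: int_rho _ _ _ _ hr u0.
  - apply: measurable_bounded_integrable => //.
    + exact: compact_finite_measure (@segment_compact R u v).
    + exists 2; split => // M M1 x _; rewrite /= normr1; apply: ltW; apply: lt_trans M1; lra.
  - move=> x /=; rewrite in_itv/= => /andP[ux _].
    by have /andP[] := hb x (le_trans u0 ux).
rewrite Rintegral_cst // mul1r.
have := lebesgue_measure_itv `[u, v]; rewrite /= => ->.
case: ifPn => /=; first by rewrite lte_fin.
by rewrite subr_ge0.
Qed.
End S8.
Section S9.
Context {R : realType}.

Lemma caseA (alpha : R) rho eta M a b e : regvar alpha rho -> 0 < eta ->
  eta <= (1 - alpha) / 2 -> 2 * eta / ((1 - alpha) * (1 - alpha)) <= e / 2 ->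
  (forall x y, M <= x -> x <= y -> x `^ eta * Lrho alpha rho x <= y `^ eta * Lrho alpha rho y) ->
  (forall x y, M <= x -> x <= y -> y `^ (- eta) * Lrho alpha rho y <= x `^ (- eta) * Lrho alpha rho x) ->
  0 < M -> 0 <= a -> a < M -> M < b ->
  M / Lrho alpha rho b + M `^ (1 - alpha) / (1 - alpha) <=
    e / 2 * (b `^ (1 - alpha) - M `^ (1 - alpha)) ->
  `|(Irho rho b - Irho rho a) / (Lrho alpha rho b * (b `^ (1 - alpha) - a `^ (1 - alpha)))
     - (1 - alpha)^-1| <= e.
Proof.
move=> hr e0 ep he hinc hdec M0 a0 aM Mb hM.
have cM := coreA _ _ _ _ _ _ hr e0 ep hinc hdec M0 (lexx M) Mb.
set p := 1 - alpha in ep he hM cM *.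
have p0 : 0 < p by move: ep; rewrite /p; lra.
have b0 : 0 < b by exact: lt_trans Mb.
have Lb := Lrho_gt0 _ _ _ hr b0.
set L := Lrho alpha rho in hinc hdec hM cM Lb *.
have hK : 0 <= Irho rho M - Irho rho a <= M.
  rewrite (diffI _ _ _ _ hr a0 (ltW aM)); apply/andP; split.
    apply: Rintegral_ge0 => x /=; rewrite in_itv/= => /andP[ax _].
    by have /andP[/ltW] := hr.2.1 x (le_trans a0 ax).
  apply: le_trans (int_le_len _ _ _ _ hr a0 (ltW aM)) _; lra.
set J' := Irho rho b - Irho rho M in cM.
set K := Irho rho M - Irho rho a in hK.
have -> : Irho rho b - Irho rho a = J' + K by rewrite /J' /K addrA subrK.
have Mp : M `^ p < b `^ p by apply: gt0_ltr_powR => //; rewrite nnegrE ltW.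
have ap : a `^ p <= M `^ p.
  by apply: ge0_ler_powR; [exact: ltW | by rewrite nnegrE | by rewrite nnegrE ltW | exact: ltW].
have ap0 : 0 <= a `^ p by exact: powR_ge0.
set DM := L b * (b `^ p - M `^ p).
have DM0 : 0 < DM by rewrite mulr_gt0 // subr_gt0.
set Da := L b * (b `^ p - a `^ p).
have DaM : DM <= Da by apply: ler_wpM2l; [exact: ltW | lra].
have Da0 : 0 < Da by exact: lt_le_trans DaM.
have h1 : `|J' - DM / p| <= e / 2 * DM.
  have -> : J' - DM / p = DM * (J' / DM - p^-1).
    by field; rewrite !gt_eqF.
  rewrite normrM (ger0_norm (ltW DM0)) mulrC; apply: ler_wpM2r; first exact: ltW.
  exact: le_trans cM he.
set X := L b * (M `^ p - a `^ p) / p.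
have X0 : 0 <= X.
  rewrite /X; apply: divr_ge0; last exact: ltW.
  by apply: mulr_ge0; [exact: ltW | rewrite subr_ge0].
have X1 : X <= L b * M `^ p / p.
  rewrite /X; apply: ler_wpM2r; first by rewrite invr_ge0; exact: ltW.
  apply: ler_wpM2l; [exact: ltW | lra].
have h2 : M + L b * M `^ p / p <= e / 2 * DM.
  have := ler_wpM2l (ltW Lb) hM.
  rewrite mulrDr mulrCA divff ?gt_eqF // mulr1 mulrA => h.
  by apply: le_trans h _; rewrite /DM; rewrite mulrCA.
have eqJ : J' + K - Da / p = (J' - DM / p) + (K - X).
  by rewrite /X /Da /DM; field; rewrite gt_eqF.
have h3 : `|J' + K - Da / p| <= e * Da.
  rewrite eqJ; apply: le_trans (ler_normD _ _) _.
  have h4 : `|K - X| <= M + L b * M `^ p / p.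
    rewrite ler_norml; apply/andP; split; lra.
  have : e / 2 * DM + e / 2 * DM <= e * Da.
    have e0' : 0 <= e.
      have : 0 <= 2 * eta / (p * p).
        by apply: divr_ge0; apply: mulr_ge0 => //; exact: ltW.
      lra.
    have := ler_wpM2l e0' DaM; lra.
  lra.
have -> : (J' + K) / Da - p^-1 = (J' + K - Da / p) / Da.
  by field; rewrite !gt_eqF.
rewrite normrM [`|Da^-1|]ger0_norm; last by rewrite invr_ge0 ltW.
by rewrite ler_pdivrMr.
Qed.
End S9.
Section S10.
Context {R : realType}.

Lemma tailA (alpha : R) rho eta M e : regvar alpha rho -> 0 < eta ->
  eta <= (1 - alpha) / 2 -> 0 < e -> 1 <= M ->
  (forall x y, M <= x -> x <= y -> x `^ eta * Lrho alpha rho x <= y `^ eta * Lrho alpha rho y) ->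
  exists B : R, forall b, B <= b ->
  M / Lrho alpha rho b + M `^ (1 - alpha) / (1 - alpha) <=
    e / 2 * (b `^ (1 - alpha) - M `^ (1 - alpha)).
Proof.
move=> hr e0 ep ee M1 hinc.
set p := 1 - alpha in ep *.
have p0 : 0 < p by move: ep; rewrite /p; lra.
have M0 : 0 < M by lra.
set L := Lrho alpha rho in hinc *.
have LM := Lrho_gt0 _ _ _ hr M0.
set C := M `^ eta * L M.
have C0 : 0 < C by rewrite mulr_gt0 // powR_gt0.
set K1 := M / C.
have K10 : 0 <= K1 by rewrite divr_ge0 // ltW.
set K2 := M `^ p / p + e / 2 * M `^ p.
have K20 : 0 <= K2.
  apply: addr_ge0; first by apply: divr_ge0; [exact: powR_ge0 | exact: ltW].
  apply: mulr_ge0; last exact: powR_ge0.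
  by apply: divr_ge0; [exact: ltW | ].
set U := Num.max 1 (2 * (K1 + K2) / e).
have U1 : 1 <= U by rewrite le_max lexx.
have U2 : 2 * (K1 + K2) / e <= U by rewrite le_max lexx orbT.
exists (Num.max M (U `^ (2 / p))) => b.
rewrite ge_max => /andP[Mb Ub].
have b1 : 1 <= b by exact: le_trans Mb.
have b0 : 0 < b by lra.
have Lb := Lrho_gt0 _ _ _ hr b0.
have hC : C <= b `^ eta * L b by exact: hinc _ _ (lexx M) Mb.
set u := b `^ (p / 2).
have hbe : b `^ eta <= u by exact: ler_powR.
have bp : b `^ p = u * u by rewrite /u -powRD' // -splitr.
have uU : U <= u.
  have e1 : (U `^ (2 / p)) `^ (p / 2) = U.
    rewrite -powRrM.
    have -> : 2 / p * (p / 2) = 1 by field; rewrite gt_eqF.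
    by rewrite powRr1 //; lra.
  rewrite -e1 /u; apply: ge0_ler_powR.
  - by apply: divr_ge0; [exact: ltW | ].
  - by rewrite nnegrE powR_ge0.
  - by rewrite nnegrE ltW.
  - exact: Ub.
have h1 : M / L b <= K1 * u.
  rewrite ler_pdivrMr //; apply: le_trans (_ : K1 * (b `^ eta * L b) <= _).
    by rewrite /K1 mulrAC ler_pdivlMr // ler_pM2l.
  rewrite mulrA; apply: ler_wpM2r; first exact: ltW.
  exact: ler_wpM2l.
have h2 : K1 + K2 <= e / 2 * u.
  have := U2; rewrite ler_pdivrMr // => h.
  have : 2 * (K1 + K2) <= U * e by [].
  have : U * e <= u * e by apply: ler_wpM2r; [exact: ltW | exact: uU].
  lra.
have h3 : (K1 + K2) * u <= e / 2 * u * u by apply: ler_wpM2r; [lra | exact: h2].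
have h4 : K2 <= K2 * u by apply: ler_peMr => //; lra.
rewrite bp; rewrite /K2 in h3 h4; lra.
Qed.
End S10.
Lemma mon_shift {R : realType} (f : R -> R) M1 M :
  M1 <= M -> (forall x y, M1 <= x -> x <= y -> f x <= f y) ->
  (forall x y, M <= x -> x <= y -> f x <= f y).
Proof. by move=> h H x y Mx xy; apply: H xy; exact: le_trans Mx. Qed.

Lemma mon_shiftD {R : realType} (f : R -> R) M1 M :
  M1 <= M -> (forall x y, M1 <= x -> x <= y -> f y <= f x) ->
  (forall x y, M <= x -> x <= y -> f y <= f x).
Proof. by move=> h H x y Mx xy; apply: H xy; exact: le_trans Mx. Qed.

Theorem lemma2p8 (R : realType) (alpha : R) (rho : R -> R) :
  0 <= alpha -> regvar alpha rho ->
  (forall eta : R, 0 < eta ->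
     eventually_increasing (fun x => x `^ eta * Lrho alpha rho x) /\
     eventually_decreasing (fun x => x `^ (- eta) * Lrho alpha rho x)) ->
  (alpha < 1 ->
     (fun b : R => ereal_sup
        [set (`| (Irho rho b - Irho rho a) /
                 (Lrho alpha rho b * (b `^ (1 - alpha) - a `^ (1 - alpha)))
               - (1 - alpha)^-1 |)%:E | a in `[0%R, b[ ])
       @ +oo --> 0%E) /\
  (1 < alpha ->
     (fun b : R => ereal_sup
        [set (`| (Irho rho a - Irho rho b) /
                 (Lrho alpha rho b * (b `^ (1 - alpha) - a `^ (1 - alpha)))
               - (alpha - 1)^-1 |)%:E | a in `]b, +oo[ ])
       @ +oo --> 0%E).
Proof.
move=> al0 hr hmon; split => al1.
- apply: (sup_cvg0 (fun b : R => `[0%R, b[%classic)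
    (fun b a => (Irho rho b - Irho rho a) /
                 (Lrho alpha rho b * (b `^ (1 - alpha) - a `^ (1 - alpha)))
               - (1 - alpha)^-1)).
  move=> e e0.
  have p0 : 0 < 1 - alpha by lra.
  pose eta := Num.min ((1 - alpha) / 2) (e * ((1 - alpha) * (1 - alpha)) / 4).
  have pp0 : 0 < (1 - alpha) * (1 - alpha) by exact: mulr_gt0.
  have eta0 : 0 < eta by rewrite lt_min !divr_gt0 // mulr_gt0.
  have ep : eta <= (1 - alpha) / 2 by rewrite ge_min lexx.
  have he : 2 * eta / ((1 - alpha) * (1 - alpha)) <= e / 2.
    have : eta <= e * ((1 - alpha) * (1 - alpha)) / 4 by rewrite ge_min lexx orbT.
    move=> h; rewrite ler_pdivrMr //; lra.
  have [[M1 hM1] [M2 hM2]] := hmon eta eta0.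
  pose M := Num.max 1 (Num.max M1 M2).
  have M1M : M1 <= M by rewrite le_max le_max lexx orbT.
  have M2M : M2 <= M by rewrite le_max le_max lexx !orbT.
  have M1' : 1 <= M by rewrite le_max lexx.
  have M0 : 0 < M by lra.
  have hinc := mon_shift _ _ _ M1M hM1.
  have hdec := mon_shiftD _ _ _ M2M hM2.
  have [B hB] := tailA _ _ _ _ _ hr eta0 ep e0 M1' hinc.
  apply: filterS (nbhs_pinfty_ge (num_real (Num.max B (M + 1)))) => b.
  rewrite ge_max => /andP[Bb Mb].
  split.
    by exists 0; rewrite /= in_itv/= lexx /=; lra.
  move=> a; rewrite /= in_itv/= => /andP[a0 ab].
  case: (leP M a) => [Ma | aM].
    apply: le_trans (coreA _ _ _ _ _ _ hr eta0 ep hinc hdec M0 Ma ab) _.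
    apply: le_trans he _; lra.
  apply: (caseA _ _ _ _ _ _ _ hr eta0 ep he hinc hdec M0 a0 aM) => //; first lra.
  exact: hB.
- apply: (sup_cvg0 (fun b : R => `]b, +oo[%classic)
    (fun b a => (Irho rho a - Irho rho b) /
                 (Lrho alpha rho b * (b `^ (1 - alpha) - a `^ (1 - alpha)))
               - (alpha - 1)^-1)).
  move=> e e0.
  have p0 : 0 < alpha - 1 by lra.
  pose eta := Num.min ((alpha - 1) / 2) (e * ((alpha - 1) * (alpha - 1)) / 2).
  have pp0 : 0 < (alpha - 1) * (alpha - 1) by exact: mulr_gt0.
  have eta0 : 0 < eta by rewrite lt_min !divr_gt0 // mulr_gt0.
  have ep : eta <= (alpha - 1) / 2 by rewrite ge_min lexx.
  have he : 2 * eta / ((alpha - 1) * (alpha - 1)) <= e.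
    have : eta <= e * ((alpha - 1) * (alpha - 1)) / 2 by rewrite ge_min lexx orbT.
    move=> h; rewrite ler_pdivrMr //; lra.
  have [[M1 hM1] [M2 hM2]] := hmon eta eta0.
  pose M := Num.max 1 (Num.max M1 M2).
  have M1M : M1 <= M by rewrite le_max le_max lexx orbT.
  have M2M : M2 <= M by rewrite le_max le_max lexx !orbT.
  have M1' : 1 <= M by rewrite le_max lexx.
  have M0 : 0 < M by lra.
  have hinc := mon_shift _ _ _ M1M hM1.
  have hdec := mon_shiftD _ _ _ M2M hM2.
  apply: filterS (nbhs_pinfty_ge (num_real M)) => b Mb.
  split.
    by exists (b + 1); rewrite /= in_itv/= andbT; lra.
  move=> a; rewrite /= in_itv/= andbT => ba.
  exact: le_trans (coreB _ _ _ _ _ _ hr eta0 ep hinc hdec M0 Mb ba) he.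
Qed.
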